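(* Let $\Sigma=\{0,1\}$ and $D=\Sigma(\Sigma\Sigma)^*\setminus\left(\Sigma^*11\Sigma^*\cup000\Sigma^*\cup101\Sigma^*\right)$. The map $\mathrm{val}_{\mathcal{F}c}$ is an increasing bijection from $(D,\prec)$ to $(\mathbb{Z},<)$.
   Context: Fibonacci numbers: $F_0=1$, $F_1=2$, $F_n=F_{n-1}+F_{n-2}$ for $n\ge2$. For a nonempty binary word $w=w_{k-1}\cdots w_0$ (digits indexed from the right), $\mathrm{val}_{\mathcal{F}c}(w)=\sum_{i=0}^{k-1}w_iF_i-w_{k-1}F_k$. Orders: $u<_{rad}v$ iff $|u|<|v|$, or $|u|=|v|$ and $u<_{lex}v$; $u<_{rev}v$ iff $|u|>|v|$, or $|u|=|v|$ and $u<_{lex}v$. The total order $\prec$ on $\Sigma^*$: $u\prec v$ iff either $u\in1\Sigma^*$ and $v\in0\Sigma^*$; or $u,v\in0\Sigma^*$ and $u<_{rad}v$; or $u,v\in1\Sigma^*$ and $u<_{rev}v$. *)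

(* Defs.v *)
(* Binary words over Sigma = {0,1} are [seq bool]
   (false = 0, true = 1), written left to right: the word
   w = w_{k-1} ... w_0 is the list [:: w_{k-1}; ...; w_0]. *)
From mathcomp Require Import all_boot all_order all_algebra.
Set Implicit Arguments. Unset Strict Implicit. Unset Printing Implicit Defensive.
Import Order.TTheory GRing.Theory Num.Theory.

Fixpoint Fib (n : nat) : nat :=
  match n with
  | 0 => 1
  | 1 => 2
  | (m.+1 as p).+1 => Fib p + Fib m
  end.

Definition word := seq bool.

Definition digit (w : word) (i : nat) : bool := nth false w (size w - 1 - i).

Definition valFc (w : word) : int :=
  ((\sum_(i < size w) (digit w i)%:Z * (Fib i)%:Z)
   - (digit w (size w - 1))%:Z * (Fib (size w))%:Z)%R.

Fixpoint lexlt (u v : word) : bool :=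
  match u, v with
  | a :: u', b :: v' => (~~ a && b) || ((a == b) && lexlt u' v')
  | [::], _ :: _ => true
  | _, _ => false
  end.

Definition radlt (u v : word) : bool :=
  (size u < size v) || ((size u == size v) && lexlt u v).

Definition revlt (u v : word) : bool :=
  (size u > size v) || ((size u == size v) && lexlt u v).

Definition starts_with (b : bool) (w : word) : bool :=
  if w is a :: _ then a == b else false.

Definition prec (u v : word) : bool :=
  [|| starts_with true u && starts_with false v,
      [&& starts_with false u, starts_with false v & radlt u v]
    | [&& starts_with true u, starts_with true v & revlt u v]].

Fixpoint has11 (w : word) : bool :=
  match w with
  | true :: (true :: _) as w' => true
  | _ :: w' => has11 w'
  | [::] => false
  end.

Definition inD (w : word) : bool :=
  [&& odd (size w), ~~ has11 w,
      ~~ prefix [:: false; false; false] w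
    & ~~ prefix [:: true; false; true] w].

(* Main.v *)
Require Import Defs.
From mathcomp Require Import all_boot all_order all_algebra.
From mathcomp Require Import zify.
Import Order.TTheory GRing.Theory Num.Theory.

Fixpoint N (w : word) : nat := if w is b :: w' then b * Fib (size w') + N w' else 0.

Lemma FibS2 n : Fib n.+2 = Fib n.+1 + Fib n. Proof. by []. Qed.
Arguments Fib : simpl never.

Lemma Fib_pm n : 0 < Fib n /\ Fib n <= Fib n.+1.
Proof. elim: n => [|n [h1 h2]] //; split; first by lia. rewrite FibS2; lia. Qed.

Lemma Fib_mono m n : m <= n -> Fib m <= Fib n.
Proof.
elim: n => [|n IH]; first by rewrite leqn0 => /eqP ->.
rewrite leq_eqVlt => /orP [/eqP -> //|]; rewrite ltnS => /IH.
have [_ h] := Fib_pm n; lia.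
Qed.

Arguments Fib_mono {m n}.

Lemma Fib_dbl n : Fib n.+1 <= 2 * Fib n.
Proof. case: n => [|n] //; rewrite FibS2; have := Fib_mono (leqnSn n); lia. Qed.

Lemma d_mono m n : m <= n -> Fib m.+1 - Fib m <= Fib n.+1 - Fib n.
Proof.
elim: n => [|n IH]; first by rewrite leqn0 => /eqP ->.
rewrite leq_eqVlt => /orP [/eqP -> //|]; rewrite ltnS => /IH.
rewrite FibS2; have := Fib_dbl n; lia.
Qed.

Lemma has11_cons a w : has11 (a :: w) = (a && head false w) || has11 w.
Proof. by case: a; case: w => [|[] w]. Qed.

Lemma no11_tl a w : ~~ has11 (a :: w) -> ~~ has11 w.
Proof. by rewrite has11_cons negb_or => /andP []. Qed.

Arguments no11_tl {a w}.

Lemma N_lt w : ~~ has11 w -> N w < Fib (size w).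
Proof.
have [n] := ubnP (size w); elim: n w => // n IH [|a w] //= hs h.
case: a h => h.
- case: w hs h => [|[] w] //= hs h.
  rewrite mul1n mul0n add0n FibS2.
  have := IH w ltac:(lia) h; lia.
- rewrite mul0n add0n; have := IH w ltac:(lia) h.
  have := Fib_mono (leqnSn (size w)); lia.
Qed.

Arguments N_lt {w}.

Lemma N_lex u v : size u = size v -> ~~ has11 u -> ~~ has11 v -> lexlt u v -> N u < N v.
Proof.
elim: u v => [|a u IH] [|b v] // hs hu hv.
have hu' := no11_tl hu; have hv' := no11_tl hv; case: hs => hs.
rewrite /= => /orP [/andP [/negbTE -> ->]|/andP [/eqP <- h]].
- rewrite mul0n mul1n add0n -hs; have := N_lt hu'; lia.
- have := IH v hs hu' hv' h; rewrite hs; lia.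
Qed.

Lemma N_surj n x : x < Fib n -> exists w, [/\ size w = n, ~~ has11 w & N w = x].
Proof.
elim/ltn_ind: n x => -[|[|n]] IH x hx.
- by exists [::]; case: x hx.
- by case: x hx => [|[|]] // _; [exists [:: false] | exists [:: true]].
- case: (ltnP x (Fib n.+1)) => h.
  + have [w [h1 h2 h3]] := IH n.+1 (ltnSn _) x h.
    by exists (false :: w); rewrite /= h1 h3.
  + have [w [h1 h2 h3]] := IH n (ltnW (ltnSn _)) (x - Fib n.+1) ltac:(rewrite FibS2 in hx; lia).
    exists (true :: false :: w); rewrite /= h1 h3; split => //; lia.
Qed.

Lemma sumN w : (\sum_(i < size w) (digit w i)%:Z * (Fib i)%:Z = (N w)%:Z)%R.
Proof.
elim: w => [|b w IH]; first by rewrite big_ord0.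
rewrite /= big_ord_recr /=.
rewrite (eq_bigr (fun i : 'I_(size w) => (digit w i)%:Z * (Fib i)%:Z)%R); last first.
  move=> i _; congr (_ * _)%R; rewrite /digit /=.
  have -> : (size w).+1 - 1 - i = (size w - 1 - i).+1 by have := ltn_ord i; lia.
  by [].
rewrite IH /digit /=.
have -> : (size w).+1 - 1 - size w = 0 by lia.
by rewrite /= PoszD PoszM addrC.
Qed.

Lemma val_cons b w : valFc (b :: w) = ((N (b :: w))%:Z - (b * Fib (size w).+1)%:Z)%R.
Proof.
rewrite /valFc sumN /digit /=.
have -> : (size w).+1 - 1 - ((size w).+1 - 1) = 0 by lia.
by rewrite PoszM.
Qed.

Module M.
Local Open Scope ring_scope.

Lemma val_false w : valFc (false :: w) = (N w)%:Z.
Proof. by rewrite val_cons /= mul0n add0n subr0. Qed.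
Lemma val_true w : valFc (true :: w) = ((Fib (size w) + N w)%:Z - (Fib (size w).+1)%:Z)%R.
Proof. by rewrite val_cons /= !mul1n. Qed.

Lemma odd_gap m n : odd m -> odd n -> (m < n)%N -> (m.+2 <= n)%N.
Proof.
move=> om on lt; have : n != m.+1 by apply/eqP=> e; move: on; rewrite e /= om.
lia.
Qed.

Arguments odd_gap {m n}.
Arguments N_lex {u v}.

Lemma mono u v : inD u -> inD v -> prec u v -> (valFc u < valFc v)%R.
Proof.
case: u => [|a u] //; case: v => [|b v] // /and4P [ou nu pu qu] /and4P [ov nv pv qv].
have nu' := no11_tl nu; have nv' := no11_tl nv.
rewrite /prec /=.
case: a ou nu pu qu; case: b ov nv pv qv => ov nv pv qv ou nu pu qu /=.
- rewrite /revlt /= => /orP [hlt | /andP [/eqP [hs] hl]].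
  + have hg := odd_gap ov ou hlt.
    clear pu; case: u nu' nu qu ou hlt hg => [|b1 [|b2 x]] //= nu' nu qu ou hlt hg.
    case: b1 nu nu' qu => // _ nu' qu; case: b2 qu nu' => [|_ nu']; first by rewrite /= prefix0s.
    rewrite !val_true /= !mul0n !add0n.
    have n1 := N_lt nu'.
    have n2 := @d_mono (size v) (size x) ltac:(lia).
    have := Fib_pm (size x); have := Fib_pm (size v).
    have := FibS2 (size x).+1; have := FibS2 (size x).
    lia.
  + rewrite !val_true; have := N_lex hs nu' nv' hl; rewrite hs; lia.
- move=> _; rewrite val_true val_false; have := N_lt nu; rewrite /= mul1n; lia.
- by [].
- rewrite orbF /radlt /= => /orP [hlt | /andP [/eqP [hs] hl]].
  + have hg := odd_gap ou ov hlt.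
    clear qv; case: v nv' nv pv ov hlt hg => [|b1 [|b2 x]] //= nv' nv pv ov hlt hg.
    rewrite !val_false.
    have n1 := N_lt nu'.
    have n2 := @Fib_mono (size u) (size x) ltac:(lia).
    have := Fib_pm (size x).
    case: b1 b2 pv nv' nv => [] [] pv nv' nv /=; try lia.
    by rewrite prefix0s in pv.
  + rewrite !val_false; have := N_lex hs nu' nv' hl; lia.
Qed.

Lemma lex_total u v : size u = size v -> u <> v -> lexlt u v || lexlt v u.
Proof.
elim: u v => [|a u IH] [|b v] //= [hs] hne.
case: a b hne => [] [] hne //=; rewrite ?orbF; apply: IH => // e; by apply: hne; rewrite e.
Qed.

Arguments lex_total {u v}.

Lemma prec_total u v : inD u -> inD v -> u <> v -> prec u v \/ prec v u.
Proof.
case: u => [|a u] //; case: v => [|b v] // _ _ hne.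
rewrite /prec /radlt /revlt /=.
case: a b hne => [] [] hne //=; (try by left); (try by right).
all: rewrite ?orbF !ltnS !eqSS; case: (ltngtP (size u) (size v)) => h /=; (try by left); (try by right).
all: have /orP [] := lex_total h (fun e => hne (congr1 _ e)) => hl.
all: first [by left; rewrite hl ?h ?eqxx | by right; rewrite hl ?h ?eqxx].
Qed.

Lemma inj u v : inD u -> inD v -> valFc u = valFc v -> u = v.
Proof.
move=> hu hv e; case: (eqVneq u v) => // /eqP hne.
case: (prec_total u v hu hv hne) => h.
- by move: (mono u v hu hv h); rewrite e ltxx.
- by move: (mono v u hv hu h); rewrite e ltxx.
Qed.


Lemma Fib_lt2 n : (Fib n < Fib n.+2)%N.
Proof. rewrite FibS2; have [h _] := Fib_pm n.+1; lia. Qed.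

Lemma pos_int y : (0 < y)%N -> exists m, (Fib m.*2 <= y < Fib m.+1.*2)%N.
Proof.
elim: y => // y IH _; case: y IH => [|y] IH.
- by exists 0; vm_compute.
- have [m /andP [h1 h2]] := IH erefl.
  case: (ltnP y.+2 (Fib m.+1.*2)) => h.
  + exists m; lia.
  + exists m.+1; have := Fib_lt2 (m.+1.*2); rewrite -!doubleS; lia.
Qed.

Lemma neg_int y : (1 < y)%N -> exists m, (Fib (m.*2).+1 - Fib m.*2 < y <= Fib (m.*2).+1)%N.
Proof.
elim: y => // y IH hy; case: y IH hy => [|[|y]] IH hy.
- by [].
- by exists 0; vm_compute.
- have [m /andP [h1 h2]] := IH erefl.
  case: (leqP y.+3 (Fib (m.*2).+1)) => h.
  + exists m; lia.
  + exists m.+1; rewrite doubleS.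
    have := FibS2 (m.*2).+1; have := FibS2 (m.*2); lia.
Qed.

Lemma surj z : exists w, inD w /\ valFc w = z.
Proof.
case: z => y.
- case: y => [|y]; first by exists [:: false]; rewrite val_false.
  have [m hm] := @pos_int y.+1 erefl.
  have [u [h1 h2 h3]] := @N_surj (m.*2).+2 y.+1 ltac:(rewrite -doubleS; lia).
  exists (false :: u); split; last by rewrite val_false h3.
  case: u h1 h2 h3 => [|b1 [|b2 x]] // [h1] h2 h3.
  rewrite /inD; apply/and4P; split.
  + by rewrite /= h1 odd_double.
  + by rewrite has11_cons andFb orFb.
  + case: b1 b2 h2 h3 => [] [] h2 h3 //=; rewrite ?prefix0s //=.
    have := N_lt (no11_tl (no11_tl h2)); move: h3 => /=; rewrite h1; lia.
  + by [].
- case: y => [|y]; first by exists [:: true]; rewrite val_true.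
  have [m hm] := @neg_int y.+2 erefl.
  have := Fib_pm (m.*2); case=> _ hF.
  have [v [h1 h2 h3]] := @N_surj (m.*2) (Fib (m.*2).+1 - y.+2) ltac:(lia).
  exists [:: true, false, false & v]; split.
  + rewrite /inD; apply/and4P; split.
    * by rewrite /= h1 odd_double.
    * by rewrite !has11_cons /=.
    * by [].
    * by [].
  + rewrite val_true /= h1 h3 !mul0n !add0n NegzE.
    have := FibS2 (m.*2).+1; have := FibS2 (m.*2); lia.
Qed.

End M.
Import M.

Theorem lemma6p7 :
  (forall u v : word, inD u -> inD v -> prec u v -> (valFc u < valFc v)%R) /\
  (forall z : int, exists w : word, inD w /\ valFc w = z) /\
  (forall u v : word, inD u -> inD v -> valFc u = valFc v -> u = v).
Proof. split; [exact: mono | split; [exact: surj | exact: inj]]. Qed.
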